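(* Every cubic graph of path-width at most 4 contains a subgraph isomorphic to one of the following: the triangle, $K_{2,3}$, the domino, the twin-house, or the claw-square.
   Context: All graphs are finite and simple; cubic means 3-regular. The domino is the $2\times 3$ grid graph (vertices $a_1,a_2,a_3,b_1,b_2,b_3$, edges $a_1a_2,a_2a_3,b_1b_2,b_2b_3,a_1b_1,a_2b_2,a_3b_3$). The twin-house is the graph on vertices $p_1,\dots,p_6$ with edges $p_1p_2,p_1p_5,p_2p_6,p_5p_3,p_5p_4,p_6p_3,p_6p_4$. The claw-square is the graph on vertices $a_1,a_2,a_3,a_4,b_1,b_2,b_3,c$ with edges $a_1a_2,a_2a_3,a_3a_4,a_4a_1$, $cb_1,cb_2,cb_3$, $b_1a_1,b_2a_2,b_3a_3$. *)

(* Defs.v *)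
From mathcomp Require Import all_boot all_order.
Set Implicit Arguments. Unset Strict Implicit. Unset Printing Implicit Defensive.

Definition simple_graph (T : finType) (e : rel T) : Prop :=
  symmetric e /\ irreflexive e.

Definition nbhd (T : finType) (e : rel T) (x : T) : {set T} := [set y | e x y].
Definition cubic (T : finType) (e : rel T) : Prop :=
  forall x : T, #|nbhd e x| = 3.

Definition path_decomposition (T : finType) (e : rel T) (bags : seq {set T}) : Prop :=
  [/\ forall x : T, exists2 i, i < size bags & x \in nth set0 bags i,
      forall x y : T, e x y ->
        exists2 i, i < size bags & (x \in nth set0 bags i) && (y \in nth set0 bags i)
    & forall (x : T) (i j k : nat), i <= j -> j <= k -> k < size bags ->
        x \in nth set0 bags i -> x \in nth set0 bags k -> x \in nth set0 bags j].

(* Width of a decomposition = (max bag size) - 1; path-width <= k iff there is a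
   path decomposition all of whose bags have at most k+1 vertices. *)
Definition pathwidth_le (T : finType) (e : rel T) (k : nat) : Prop :=
  exists bags : seq {set T}, path_decomposition e bags /\
    forall B, B \in bags -> #|B| <= k.+1.

Definition edge_rel (n : nat) (E : seq (nat * nat)) : rel 'I_n :=
  fun x y => ((val x, val y) \in E) || ((val y, val x) \in E).

Definition has_subgraph (n : nat) (h : rel 'I_n) (T : finType) (e : rel T) : Prop :=
  exists f : 'I_n -> T, injective f /\ forall x y, h x y -> e (f x) (f y).

Definition triangle : rel 'I_3 := @edge_rel 3 [:: (0,1); (1,2); (0,2)].

Definition K23 : rel 'I_5 :=
  @edge_rel 5 [:: (0,2); (0,3); (0,4); (1,2); (1,3); (1,4)].

(* Domino: a1,a2,a3,b1,b2,b3 = 0,1,2,3,4,5. *)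
Definition domino : rel 'I_6 :=
  @edge_rel 6 [:: (0,1); (1,2); (3,4); (4,5); (0,3); (1,4); (2,5)].

(* Twin-house: p1,...,p6 = 0,...,5; edges p1p2,p1p5,p2p6,p5p3,p5p4,p6p3,p6p4. *)
Definition twin_house : rel 'I_6 :=
  @edge_rel 6 [:: (0,1); (0,4); (1,5); (4,2); (4,3); (5,2); (5,3)].

(* Claw-square: a1,a2,a3,a4,b1,b2,b3,c = 0,1,2,3,4,5,6,7. *)
Definition claw_square : rel 'I_8 :=
  @edge_rel 8 [:: (0,1); (1,2); (2,3); (3,0); (7,4); (7,5); (7,6); (4,0); (5,1); (6,2)].

(* Main.v *)
Require Import Defs.
From mathcomp Require Import all_boot all_order.
Set Implicit Arguments. Unset Strict Implicit. Unset Printing Implicit Defensive.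

Definition state := seq (seq nat).
Definition adjb (st : state) i j := j \in nth [::] st i.
Definition ext (st : state) (Sx : seq nat) : state :=
  rcons [seq (if i \in Sx then rcons (nth [::] st i) (size st) else nth [::] st i) | i <- iota 0 (size st)] Sx.
Fixpoint subs (s : seq nat) : seq (seq nat) :=
  if s is x :: s' then let r := subs s' in [seq x :: t | t <- r] ++ r else [:: [::]].
Definition children (st : state) : seq state :=
  [seq ext st Sx | Sx <- subs [seq i <- iota 0 (size st) | size (nth [::] st i) < 3] & (size Sx <= 3) && all (fun l => size l <= 3) (ext st Sx)].
Definition bd (st : state) := count (fun l => size l < 3) st.
Definition cubicst (st : state) := (0 < size st) && all (fun l => size l == 3) st.

Definition check_emb (p : nat) (E : seq (nat * nat)) (st : state) (w : seq nat) :=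
  [&& size w == p, uniq w, all (fun v => v < size st) w &
      all (fun ab => adjb st (nth 0 w ab.1) (nth 0 w ab.2)) E].

Fixpoint memn (x : nat) (s : seq nat) : bool :=
  if s is y :: s' then (if Nat.eqb x y then true else memn x s') else false.
Definition adjn (st : state) i j := memn j (nth [::] st i).
Fixpoint allpos (st : state) (imgs : seq nat) (c : nat) (ps : seq nat) : bool :=
  if ps is q :: ps' then (if adjn st (nth 0 imgs q) c then allpos st imgs c ps' else false) else true.
Fixpoint go (st : state) (prog : seq (seq nat)) (imgs : seq nat) : option (seq nat) :=
  match prog with
  | [::] => Some imgs
  | ps :: prog' =>
    let cs := match ps with q :: _ => nth [::] st (nth 0 imgs q) | [::] => [:: (size st).-1] end in
    let fix try cs := match cs with
      | [::] => None
      | c :: cs' => if memn c imgs then try cs' else if allpos st imgs c ps then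
                      match go st prog' (c :: imgs) with Some r => Some r | None => try cs' end
                    else try cs' end in
    try cs
  end.
Definition chk p E (op : seq nat * seq (seq nat)) st :=
  let imgs := rev (odflt [::] (go st op.2 [::])) in
  check_emb p E st [seq nth 0 imgs (index v op.1) | v <- iota 0 p].

Definition Etri := [:: (0,1); (1,2); (0,2)].
Definition EK23 := [:: (0,2); (0,3); (0,4); (1,2); (1,3); (1,4)].
Definition Edom := [:: (0,1); (1,2); (3,4); (4,5); (0,3); (1,4); (2,5)].
Definition Etwin := [:: (0,1); (0,4); (1,5); (4,2); (4,3); (5,2); (5,3)].
Definition Eclaw := [:: (0,1); (1,2); (2,3); (3,0); (7,4); (7,5); (7,6); (4,0); (5,1); (6,2)].

Fixpoint lhas {A} (p : A -> bool) (s : seq A) : bool :=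
  if s is x :: s' then (if p x then true else lhas p s') else false.
Definition chkP p E ords st := lhas (fun ord => chk p E ord st) ords.
Definition forb st :=
  if chkP 3 Etri [:: ([:: 0;1;2], [:: [:: ]; [:: 0]; [:: 1;0]])] st then true else
  if chkP 5 EK23 [:: ([:: 0;2;3;4;1], [:: [:: ]; [:: 0]; [:: 1]; [:: 2]; [:: 2;1;0]]); ([:: 2;0;1;3;4], [:: [:: ]; [:: 0]; [:: 1]; [:: 1;0]; [:: 2;1]])] st then true else
  if chkP 6 Edom [:: ([:: 0;1;3;2;4;5], [:: [:: ]; [:: 0]; [:: 1]; [:: 1]; [:: 2;1]; [:: 1;0]]); ([:: 1;0;2;4;3;5], [:: [:: ]; [:: 0]; [:: 1]; [:: 2]; [:: 2;0]; [:: 2;1]])] st then true else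
  if chkP 6 Etwin [:: ([:: 0;1;4;5;2;3], [:: [:: ]; [:: 0]; [:: 1]; [:: 1]; [:: 1;0]; [:: 2;1]]); ([:: 4;0;2;3;1;5], [:: [:: ]; [:: 0]; [:: 1]; [:: 2]; [:: 2]; [:: 2;1;0]]); ([:: 2;4;5;0;3;1], [:: [:: ]; [:: 0]; [:: 1]; [:: 1]; [:: 2;1]; [:: 2;1]])] st then true else
  chkP 8 Eclaw [:: ([:: 0;1;3;4;2;5;7;6], [:: [:: ]; [:: 0]; [:: 1]; [:: 2]; [:: 2;1]; [:: 3]; [:: 2;0]; [:: 2;0]]); ([:: 1;0;2;5;3;4;6;7], [:: [:: ]; [:: 0]; [:: 1]; [:: 2]; [:: 2;1]; [:: 3]; [:: 3]; [:: 3;1;0]]); ([:: 3;0;2;1;4;6;5;7], [:: [:: ]; [:: 0]; [:: 1]; [:: 1;0]; [:: 2]; [:: 2]; [:: 2]; [:: 2;1;0]]); ([:: 4;0;7;1;3;5;6;2], [:: [:: ]; [:: 0]; [:: 1]; [:: 1]; [:: 2]; [:: 2;1]; [:: 3]; [:: 3;2;0]]); ([:: 5;1;7;0;2;4;6;3], [:: [:: ]; [:: 0]; [:: 1]; [:: 1]; [:: 2]; [:: 2;1]; [:: 3;1]; [:: 3;2]]); ([:: 7;4;5;6;0;1;2;3], [:: [:: ]; [:: 0]; [:: 1]; [:: 2]; [:: 2]; [:: 2;0]; [:: 2;0]; [:: 2;0]])] st.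

Fixpoint lall (p : state -> bool) (s : seq state) : bool :=
  if s is x :: s' then (if p x then lall p s' else false) else true.

Fixpoint explore (f : nat) (st : state) : bool :=
  match f with
  | 0 => false
  | f'.+1 => if 4 < bd st then true else if forb st then true else if cubicst st then false else lall (explore f') (children st)
  end.

Lemma explore_ok : explore 10 [::] = true.
Proof. by vm_compute. Qed.

Lemma lall_all p s : lall p s = all p s.
Proof. by elim: s => //= x s IH; case: (p x). Qed.

Lemma lhas_has A (p : A -> bool) s : lhas p s = has p s.
Proof. by elim: s => //= x s IH; case: (p x). Qed.

Lemma mem_subs (p : pred nat) s : [seq x <- s | p x] \in subs s.
Proof.
elim: s => [|x s IH] /=; first by rewrite mem_seq1.
rewrite mem_cat; case: (p x); last by rewrite IH orbT.
by rewrite (map_f (cons x) IH).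
Qed.

Definition stG (T : finType) (e : rel T) (x0 : T) (s : seq T) (k : nat) : state :=
  mkseq (fun i => [seq j <- iota 0 k | e (nth x0 s i) (nth x0 s j)]) k.

Lemma size_stG (T : finType) (e : rel T) x0 s k : size (stG e x0 s k) = k.
Proof. by rewrite size_mkseq. Qed.

Lemma nth_stG (T : finType) (e : rel T) x0 s k i : i < k ->
  nth [::] (stG e x0 s k) i = [seq j <- iota 0 k | e (nth x0 s i) (nth x0 s j)].
Proof. by move=> H; rewrite nth_mkseq. Qed.

Lemma iotaSr k : iota 0 k.+1 = rcons (iota 0 k) k.
Proof. by rewrite -addn1 iotaD add0n cats1. Qed.

Lemma stG_S (T : finType) (e : rel T) x0 s k : simple_graph e ->
  stG e x0 s k.+1 = ext (stG e x0 s k) [seq j <- iota 0 k | e (nth x0 s k) (nth x0 s j)].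
Proof.
move=> [Hsym Hirr].
apply: (@eq_from_nth _ [::]).
  by rewrite size_stG /ext size_rcons size_map size_iota size_stG.
move=> i; rewrite size_stG => Hi.
rewrite nth_stG // /ext nth_rcons size_map size_iota size_stG.
rewrite iotaSr filter_rcons.
have [Hik|Hik] : i < k \/ i = k.
  by rewrite ltnS leq_eqVlt in Hi; case/orP: Hi => [/eqP ->|->]; [right|left].
  rewrite Hik (nth_map 0) ?size_iota // nth_iota // add0n nth_stG //.
  rewrite mem_filter mem_iota /= Hik Hsym andbT.
  by case: (e _ _).
by rewrite Hik ltnn eqxx Hirr.
Qed.


Lemma count_take_nbhd (T : finType) (e : rel T) (s : seq T) k x :
  uniq s -> cubic e -> count (e x) (take k s) <= 3.
Proof.
move=> Hu Hc.
rewrite -size_filter -(card_uniqP _); last by rewrite filter_uniq // take_uniq.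
rewrite -(Hc x); apply: subset_leq_card; apply/subsetP => y.
by rewrite mem_filter in_set => /andP [].
Qed.

Lemma count_take_ge (T : finType) (e : rel T) (s : seq T) k x :
  uniq s -> cubic e -> (forall y, e x y -> y \in take k s) -> 3 <= count (e x) (take k s).
Proof.
move=> Hu Hc Hin.
rewrite -size_filter -(card_uniqP _); last by rewrite filter_uniq // take_uniq.
rewrite -(Hc x); apply: subset_leq_card; apply/subsetP => y.
by rewrite in_set mem_filter => H; rewrite H Hin.
Qed.

Lemma deg_stG (T : finType) (e : rel T) x0 (s : seq T) k i : k <= size s ->
  size [seq j <- iota 0 k | e (nth x0 s i) (nth x0 s j)] = count (e (nth x0 s i)) (take k s).
Proof.
move=> Hk; rewrite size_filter -(map_nth_iota0 x0 Hk) count_map.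
by apply: eq_count.
Qed.

Lemma child_stG (T : finType) (e : rel T) x0 (s : seq T) k :
  simple_graph e -> uniq s -> cubic e -> k < size s ->
  stG e x0 s k.+1 \in children (stG e x0 s k).
Proof.
move=> Hg Hu Hc Hk.
have Hsym := Hg.1.
rewrite /children stG_S //.
apply: map_f; rewrite mem_filter; apply/andP; split.
  apply/andP; split.
    rewrite deg_stG ?(ltnW Hk) //; exact: count_take_nbhd.
  rewrite -stG_S //; apply/allP => l /mapP [i Hi ->].
  rewrite deg_stG //; exact: count_take_nbhd.
rewrite size_stG.
have -> : [seq j <- iota 0 k | e (nth x0 s k) (nth x0 s j)] =
  [seq j <- [seq i <- iota 0 k | size (nth [::] (stG e x0 s k) i) < 3] | e (nth x0 s k) (nth x0 s j)].
  rewrite -filter_predI; apply: eq_in_filter => j; rewrite mem_iota /= add0n => Hj.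
  case He: (e _ _) => //=; symmetry.
  rewrite nth_stG //.
  have := count_take_nbhd k.+1 (nth x0 s j) Hu Hc.
  rewrite -(@deg_stG _ e x0 s k.+1 j Hk) iotaSr filter_rcons Hsym He size_rcons.
  by [].
exact: mem_subs.
Qed.

Lemma stG_full (T : finType) (e : rel T) x0 (s : seq T) :
  uniq s -> cubic e -> (forall x, x \in s) -> 0 < size s ->
  cubicst (stG e x0 s (size s)) /\ bd (stG e x0 s (size s)) = 0.
Proof.
move=> Hu Hc Hall Hn.
have H3 : forall l, l \in stG e x0 s (size s) -> size l = 3.
  move=> l /mapP [i Hi ->]; rewrite deg_stG // take_size.
  rewrite -size_filter -(card_uniqP _); last by rewrite filter_uniq.
  rewrite -(Hc (nth x0 s i)); apply: eq_card => y.
  by rewrite mem_filter in_set Hall andbT.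
split.
  rewrite /cubicst size_stG Hn /=; apply/allP => l Hl; by rewrite H3.
rewrite /bd; apply/eqP; rewrite -leqn0 leqNgt -has_count; apply/hasPn => l Hl.
by rewrite H3.
Qed.

Lemma check_emb_sound (T : finType) (e : rel T) x0 (s : seq T) k p E w :
  simple_graph e -> uniq s -> k <= size s ->
  check_emb p E (stG e x0 s k) w -> has_subgraph (@edge_rel p E) e.
Proof.
move=> [Hsym Hirr] Hu Hk /and4P [/eqP Hw Huw /allP Hlt /allP He].
have Hwk : forall x : 'I_p, nth 0 w x < k.
  move=> x; have := Hlt (nth 0 w x); rewrite size_stG; apply; apply: mem_nth; by rewrite Hw.
exists (fun x : 'I_p => nth x0 s (nth 0 w x)); split.
  move=> x y /eqP; rewrite nth_uniq ?(leq_trans (Hwk _) Hk) //.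
  rewrite nth_uniq ?Hw // => /eqP H; exact: val_inj.
have key : forall a b : 'I_p, (val a, val b) \in E -> e (nth x0 s (nth 0 w a)) (nth x0 s (nth 0 w b)).
  move=> a b H; have := He _ H; rewrite /adjb /= nth_stG // mem_filter.
  by case/andP.
move=> x y; rewrite /edge_rel => /orP [] H; first exact: key.
by rewrite Hsym; apply: key.
Qed.

Lemma chkP_sound (T : finType) (e : rel T) x0 (s : seq T) k p E ops :
  simple_graph e -> uniq s -> k <= size s ->
  chkP p E ops (stG e x0 s k) -> has_subgraph (@edge_rel p E) e.
Proof.
move=> Hg Hu Hk; rewrite /chkP lhas_has => /hasP [op _ H].
exact: check_emb_sound Hg Hu Hk H.
Qed.

Definition Disj (T : finType) (e : rel T) :=
  has_subgraph triangle e \/ has_subgraph K23 e \/ has_subgraph domino e \/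
  has_subgraph twin_house e \/ has_subgraph claw_square e.

Lemma forb_sound (T : finType) (e : rel T) x0 (s : seq T) k :
  simple_graph e -> uniq s -> k <= size s ->
  forb (stG e x0 s k) -> Disj e.
Proof.
move=> Hg Hu Hk; rewrite /forb.
case: ifP => [H _|_]; first by left; exact: chkP_sound Hg Hu Hk H.
case: ifP => [H _|_]; first by right; left; exact: chkP_sound Hg Hu Hk H.
case: ifP => [H _|_]; first by right; right; left; exact: chkP_sound Hg Hu Hk H.
case: ifP => [H _|_ H]; first by right; right; right; left; exact: chkP_sound Hg Hu Hk H.
by right; right; right; right; exact: chkP_sound Hg Hu Hk H.
Qed.

Lemma explore_sound (T : finType) (e : rel T) x0 (s : seq T) :
  simple_graph e -> uniq s -> cubic e -> (forall x, x \in s) -> 0 < size s ->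
  (forall k, k < size s -> bd (stG e x0 s k) <= 4) ->
  forall f k, k <= size s -> explore f (stG e x0 s k) -> Disj e.
Proof.
move=> Hg Hu Hc Hall Hn Hbd f; elim: f => [//|f IH] k Hk /=.
have [Hcub Hbd0] := stG_full x0 Hu Hc Hall Hn.
case: ifP => [Hb _|_].
  move: Hk; rewrite leq_eqVlt => /orP [/eqP Hk|Hk].
    by move: Hb; rewrite Hk Hbd0.
  by move: (Hbd _ Hk); rewrite leqNgt Hb.
case: ifP => [Hf _|_]; first exact: forb_sound Hg Hu Hk Hf.
case: ifP => [//|Hnc].
rewrite lall_all => /allP Hch.
have Hk' : k < size s.
  move: Hk; rewrite leq_eqVlt => /orP [/eqP Hk|//].
  by move: Hnc; rewrite Hk Hcub.
apply: (IH k.+1 Hk'); apply: Hch; exact: child_stG.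
Qed.

Lemma bd_bags (T : finType) (e : rel T) x0 (bags : seq {set T}) :
  simple_graph e -> cubic e -> path_decomposition e bags ->
  (forall B, B \in bags -> #|B| <= 5) ->
  let l := fun x => find (fun B : {set T} => x \in B) bags in
  let s := sort (fun x y => l x <= l y) (enum T) in
  forall k, k < size s -> bd (stG e x0 s k) <= 4.
Proof.
move=> [Hsym Hirr] Hc [Hcov Hedge Hcont] Hsz l s k Hk.
have Hu : uniq s by rewrite sort_uniq enum_uniq.
have Hall : forall x, x \in s by move=> x; rewrite mem_sort mem_enum.
have Hhas : forall x, has (fun B : {set T} => x \in B) bags.
  move=> x; have [i Hi Hx] := Hcov x; apply/hasP; exists (nth set0 bags i) => //.
  exact: mem_nth.
have Hlt : forall x, l x < size bags by move=> x; rewrite -has_find.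
have Hin : forall x, x \in nth set0 bags (l x) by move=> x; exact: (nth_find set0 (Hhas x)).
have Hmin : forall x t, x \in nth set0 bags t -> l x <= t.
  move=> x t Ht; rewrite leqNgt; apply/negP => /(before_find set0); by rewrite Ht.
have Hsorted : sorted (fun x y => l x <= l y) s.
  by apply: sort_sorted => x y; exact: leq_total.
have Hmono : forall i j, i <= j -> j < size s -> l (nth x0 s i) <= l (nth x0 s j).
  move=> i j Hij Hj.
  have tr : transitive (fun x y : T => l x <= l y) by move=> a b c; exact: leq_trans.
  apply: (sorted_leq_nth tr (fun a => leqnn (l a)) x0 Hsorted) => //; rewrite inE //.
  exact: leq_ltn_trans Hij Hj.
set q := l (nth x0 s k).
set B := nth set0 bags q.
have HB : B \in bags by apply: mem_nth; exact: Hlt.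
have HkB : nth x0 s k \in B by exact: Hin.
set P := fun i => size [seq j <- iota 0 k | e (nth x0 s i) (nth x0 s j)] < 3.
have -> : bd (stG e x0 s k) = count P (iota 0 k).
  by rewrite /bd /stG /mkseq count_map.
have Hsub : {subset [seq nth x0 s i | i <- [seq i <- iota 0 k | P i]] <= B :\ nth x0 s k}.
  move=> z /mapP [i]; rewrite mem_filter mem_iota add0n /= => /andP [HP Hik] ->.
  have Hik' : i < size s by exact: ltn_trans Hik Hk.
  rewrite in_setD1; apply/andP; split.
    by rewrite nth_uniq // (ltn_eqF Hik).
  have [y Hy Hyk] : exists2 y, e (nth x0 s i) y & y \notin take k s.
    case Hh: (has (fun y => e (nth x0 s i) y && (y \notin take k s)) (enum T)).
      by move/hasP: Hh => [y _ /andP [H1 H2]]; exists y.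
    move: HP; rewrite /P (@deg_stG _ e x0 s k i (ltnW Hk)) ltnNge count_take_ge //.
    move=> y Hy; move/hasPn: Hh => /(_ y); rewrite mem_enum Hy /= negbK; exact.
  set j := index y s.
  have Hj : j < size s by rewrite index_mem.
  have Hyj : nth x0 s j = y by rewrite nth_index.
  have Hkj : k <= j.
    rewrite leqNgt; apply/negP => Hjk; move/negP: Hyk; apply.
    rewrite -Hyj -(nth_take x0 Hjk); apply: mem_nth; rewrite size_take Hk //.
  have [t Ht /andP [Hxt Hyt]] := Hedge _ _ Hy.
  have Hlyt : l y <= t by exact: Hmin.
  have H1 : l (nth x0 s i) <= q by apply: Hmono => //; exact: ltnW.
  have H2 : q <= t by apply: leq_trans (Hmono _ _ Hkj Hj) _; rewrite Hyj.
  exact: (Hcont _ _ _ _ H1 H2 Ht (Hin _) Hxt).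
rewrite -size_filter -(size_map (nth x0 s)).
rewrite -(card_uniqP _); last first.
  rewrite map_inj_in_uniq ?filter_uniq ?iota_uniq //.
  move=> a b; rewrite !mem_filter !mem_iota !add0n /= => /andP [_ Ha] /andP [_ Hb] /eqP.
  by rewrite nth_uniq ?(ltn_trans Ha Hk) ?(ltn_trans Hb Hk) // => /eqP.
apply: leq_trans (subset_leq_card (introT subsetP Hsub)) _.
have := cardsD1 (nth x0 s k) B; rewrite HkB add1n => HBc.
by move: (Hsz _ HB); rewrite HBc ltnS.
Qed.

Theorem lemma29 (T : finType) (e : rel T) :
  simple_graph e -> 0 < #|T| -> cubic e -> pathwidth_le e 4 ->
  has_subgraph triangle e \/ has_subgraph K23 e \/ has_subgraph domino e \/
  has_subgraph twin_house e \/ has_subgraph claw_square e.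
Proof.
move=> Hg HT Hc [bags [Hpd Hsz]].
have [x0 _] := card_gt0P HT.
pose l := fun x => find (fun B : {set T} => x \in B) bags.
pose s := sort (fun x y => l x <= l y) (enum T).
have Hu : uniq s by rewrite sort_uniq enum_uniq.
have Hall : forall x, x \in s by move=> x; rewrite mem_sort mem_enum.
have Hn : 0 < size s by rewrite size_sort -cardT.
have Hbd := bd_bags x0 Hg Hc Hpd Hsz.
have H1 := @explore_sound T e x0 s Hg Hu Hc Hall Hn.
have H2 := H1 Hbd 10 0 (leq0n _) explore_ok.
exact: H2.
Qed.
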